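(* Let $q$ be a prime power, let $h(x)\in\mathbb{F}_{q^6}[x]$, let $L(x)=\sum_i a_i x^{q^i}$ be a $q$-polynomial with all $a_i\in\mathbb{F}_q$, and let $\delta\in\mathbb{F}_{q^6}$. Write $w(x)=x^{q^2}-x^q+x+\delta$. Then the polynomial $$f(x)=h(w(x))^{q^4}+h(w(x))^{q^3}-h(w(x))^{q}-h(w(x))+L(x)$$ permutes $\mathbb{F}_{q^6}$ if and only if $L(x)$ permutes $\mathbb{F}_{q^6}$.
   Context: A polynomial permutes $\mathbb{F}_{q^6}$ if it induces a bijection of $\mathbb{F}_{q^6}$. *)

(* Defs.v *)
From mathcomp Require Import all_boot all_order all_algebra all_field.
Set Implicit Arguments. Unset Strict Implicit. Unset Printing Implicit Defensive.
Import GRing.Theory.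
Local Open Scope ring_scope.

Definition prime_power (q : nat) : Prop :=
  exists p k : nat, prime p /\ (0 < k)%N /\ q = (p ^ k)%N.

Definition in_Fq (F : finFieldType) (q : nat) (c : F) : bool := c ^+ q == c.

Definition qpoly_fun (F : finFieldType) (q : nat) (a : seq F) (x : F) : F :=
  \sum_(i < size a) a`_i * x ^+ (q ^ i).

Definition wfun (F : finFieldType) (q : nat) (delta x : F) : F :=
  x ^+ (q ^ 2) - x ^+ q + x + delta.

Definition ffun_main (F : finFieldType) (q : nat) (h : {poly F}) (a : seq F)
  (delta x : F) : F :=
  let y := h.[wfun q delta x] in
  y ^+ (q ^ 4) + y ^+ (q ^ 3) - y ^+ q - y + qpoly_fun q a x.

(* Main.v *)
Require Import Defs.
From mathcomp Require Import all_boot all_order all_algebra all_field.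
From mathcomp Require Import ring.
Local Open Scope ring_scope.
Import GRing.Theory.

Definition sn {F : finFieldType} (q i : nat) (x : F) : F := x ^+ (q ^ i).

Theorem mainTheorem9 (F : finFieldType) (q : nat) (hq : prime_power q)
  (hF : #|F| = (q ^ 6)%N) (h : {poly F}) (a : seq F)
  (ha : all (in_Fq q) a) (delta : F) :
  bijective (ffun_main q h a delta) <-> bijective (qpoly_fun q a).
Proof.
have [p [k [pp [k0 qE]]]] := hq.
have pch : p \in [pchar F].
  apply: (@card_finPcharP F p (k * 6)) => //; by rewrite hF qE expnM.
have q0 : (0 < q)%N by rewrite qE expn_gt0 prime_gt0.
have qnat i : [pchar F].-nat (q ^ i)%N.
  by rewrite pnatX qE pnatX pnatE // pch.
have snD i (x y : F) : sn q i (x + y) = sn q i x + sn q i y.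
  by rewrite /sn (exprDn_pchar _ _ (qnat i)).
have sn0 i : sn q i (0 : F) = 0 by rewrite /sn expr0n expn_eq0; case: (q) q0.
have snN i (x : F) : sn q i (- x) = - sn q i x.
  apply/eqP; rewrite -subr_eq0 opprK -snD addNr sn0 //.
have snM i (x y : F) : sn q i (x * y) = sn q i x * sn q i y by rewrite /sn exprMn.
have snC i j (x : F) : sn q i (sn q j x) = sn q (i + j) x.
  by rewrite /sn -exprM -expnD addnC.
have sn6 (x : F) : sn q 6 x = x by rewrite /sn -hF expf_card.
have sn1 (x : F) : sn q 1 x = x ^+ q by rewrite /sn expn1.
have snA i c : c \in a -> sn q i c = c.
  move=> ca; have /eqP cq : c ^+ q == c by move/allP: ha => /(_ c ca).
  elim: i => [|i IH]; first by rewrite /sn expn0 expr1.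
  by rewrite /sn expnS mulnC exprM -/(sn q i c) IH cq.
pose L := qpoly_fun q a.
have LD x y : L (x + y) = L x + L y.
  by rewrite /L /qpoly_fun -big_split; apply: eq_bigr => i _; rewrite -!/(sn q i _) snD mulrDr.
have LN x : L (- x) = - L x.
  by rewrite /L /qpoly_fun -sumrN; apply: eq_bigr => i _; rewrite -!/(sn q i _) snN mulrN.
have L0 : L 0 = 0 by apply: (addrI (L 0)); rewrite -LD !addr0.
have snL i (x : F) : sn q i (L x) = L (sn q i x).
  rewrite /L /qpoly_fun (big_morph (sn q i) (snD i) (sn0 i)).
  apply: eq_bigr => j _; rewrite -!/(sn q _ _) snM snC addnC -snC snA //.
  by apply: mem_nth.
pose psi (x : F) := sn q 2 x - sn q 1 x + x.
have psiD x y : psi (x + y) = psi x + psi y.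
  by rewrite /psi !snD; ring.
have psiN x : psi (- x) = - psi x by rewrite /psi !snN; ring.
have psi0 : psi 0 = 0 by rewrite /psi !sn0; ring.
have psiL x : psi (L x) = L (psi x) by rewrite /psi !snL !LD LN.
pose T (y : F) := sn q 4 y + sn q 3 y - sn q 1 y - y.
have psiT y : psi (T y) = 0.
  rewrite /psi /T !(snD, snN, snC) /= sn6.
  have e1 : sn q 1 y = sn q (1 + 0) y by [].
  ring.
have fE x : ffun_main q h a delta x = T h.[psi x + delta] + L x.
  by rewrite /ffun_main /T /wfun /psi !sn1 /sn.
have key x : psi (ffun_main q h a delta x) = L (psi x).
  by rewrite fE psiD psiT add0r psiL.
split=> fb; apply: injF_bij.
- have finj := bij_inj fb.
  have ker z : L z = 0 -> psi z = 0 -> z = 0.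
    move=> Lz pz; apply: finj; rewrite !fE Lz pz psi0 L0; by [].
  pose I := [set psi x | x in [set: F]].
  have fT : [set ffun_main q h a delta x | x in [set: F]] = [set: F].
    apply/setP => u; rewrite inE; case: fb => g _ gK.
    by apply/imsetP; exists (g u); rewrite ?inE ?gK.
  have Linj : {in I &, injective L}.
    apply/imset_injP; rewrite -imset_comp.
    have -> : [set (L \o psi) x | x in [set: F]] =
              [set (psi \o ffun_main q h a delta) x | x in [set: F]].
      by apply: eq_imset => x /=; rewrite key.
    by rewrite (imset_comp psi (ffun_main q h a delta)) fT.
  have kerL z : L z = 0 -> z = 0.
    move=> Lz; apply: ker => //.
    apply: Linj; rewrite -?psiL ?Lz ?psi0 ?L0 //; apply/imsetP.
      by exists z; rewrite ?inE.
    by exists 0; rewrite ?inE ?psi0.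
  move=> x y Lxy; apply/eqP; rewrite -subr_eq0; apply/eqP/kerL.
  by rewrite LD LN /L Lxy subrr.
- have Linj : injective L := bij_inj fb.
  move=> x y fxy.
  have pxy : psi x = psi y by apply: Linj; rewrite -(key x) -(key y) fxy.
  have : L x = L y.
    by move: fxy; rewrite !fE pxy => /addrI.
  exact: Linj.
Qed.
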